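(* Let $n\ge3$, $0<\epsilon<1$, and define $\alpha,\beta,\gamma,\delta$ and the polynomial $Q(\rho)$ as in the context. If $\epsilon>0$ is sufficiently small, then $Q(\rho)>0$ for all $\rho\in(\epsilon,1)$.
   Context: $D(\epsilon) = -n\epsilon^{n+2} + (n+2)\epsilon^{n+1} + n - (n+2)\epsilon$, $N(\epsilon) = -n\epsilon^{n+1} + (n+1)\epsilon^n - 1$, $K(\epsilon) = -1 + \frac{n+1}{n-1}\epsilon - \epsilon^{n-1} + \frac{n-3}{n-1}\epsilon^n$, $M(\epsilon) = \frac{\epsilon^{n+1}-1}{n(n+1)} + \frac{\epsilon-\epsilon^n}{n(n-1)}$; $\delta = \Big(\epsilon^{n-2}(1-\epsilon) - \frac{(n+2)N K}{D} + \frac{n(n-3)}{n-1}\epsilon^{n-1} - (n-1)\epsilon^{n-2} + \frac{n+1}{n-1}\Big)\Big(\frac{(n+2)N}{D}M + \frac{-(n-1)\epsilon^n + n\epsilon^{n-1}-1}{n(n-1)}\Big)^{-1}$, $\gamma = n(n+1)(n+2)(M\delta + K)/D$, $\alpha = -1 - \frac{\delta}{n(n+1)} - \frac{\gamma}{(n+1)(n+2)}$, $\beta = \frac{n+1}{n-1} + \frac{\delta}{n(n-1)} + \frac{\gamma}{n(n+1)}$ (denominators are nonzero for small $\epsilon$); $Q(\rho) = -\frac{\gamma}{(n+1)(n+2)}\rho^{n+2} - \frac{\delta-\gamma}{n(n+1)}\rho^{n+1} - \Big(1 - \frac{2n+\delta}{n(n-1)}\Big)\rho^n + \rho^{n-1}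 - \alpha - \beta\rho$. *)

(* Defs.v *)
From Stdlib Require Import Reals Lra.
Open Scope R_scope.

Section Defs.
Variables (n : nat) (e : R).
Let nr : R := INR n.

Definition Dp : R := - nr * e ^ (n + 2) + (nr + 2) * e ^ (n + 1) + nr - (nr + 2) * e.
Definition Np : R := - nr * e ^ (n + 1) + (nr + 1) * e ^ n - 1.
Definition Kp : R := -1 + (nr + 1) / (nr - 1) * e - e ^ (n - 1) + (nr - 3) / (nr - 1) * e ^ n.
Definition Mp : R := (e ^ (n + 1) - 1) / (nr * (nr + 1)) + (e - e ^ n) / (nr * (nr - 1)).

Definition delta : R :=
  (e ^ (n - 2) * (1 - e) - (nr + 2) * Np * Kp / Dp
     + nr * (nr - 3) / (nr - 1) * e ^ (n - 1) - (nr - 1) * e ^ (n - 2) + (nr + 1) / (nr - 1))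
  * / ((nr + 2) * Np / Dp * Mp + (- (nr - 1) * e ^ n + nr * e ^ (n - 1) - 1) / (nr * (nr - 1))).

Definition gamma : R := nr * (nr + 1) * (nr + 2) * (Mp * delta + Kp) / Dp.

Definition alpha : R := -1 - delta / (nr * (nr + 1)) - gamma / ((nr + 1) * (nr + 2)).

Definition beta : R := (nr + 1) / (nr - 1) + delta / (nr * (nr - 1)) + gamma / (nr * (nr + 1)).

Definition Q (rho : R) : R :=
  - gamma / ((nr + 1) * (nr + 2)) * rho ^ (n + 2)
  - (delta - gamma) / (nr * (nr + 1)) * rho ^ (n + 1)
  - (1 - (2 * nr + delta) / (nr * (nr - 1))) * rho ^ n
  + rho ^ (n - 1) - alpha - beta * rho.
End Defs.

(* Main.v *)
Require Import Defs.
From Stdlib Require Import Reals Lra Lia Field.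
From Coquelicot Require Import Coquelicot.
Open Scope R_scope.
Lemma INR3 n : (3 <= n)%nat -> 3 <= INR n.
Proof. intros; replace 3 with (INR 3) by (simpl; ring); apply le_INR; lia. Qed.

Lemma INRm n k : (k <= n)%nat -> INR (n - k) = INR n - INR k.
Proof. intros; apply minus_INR; auto. Qed.

Definition den n e := (INR n + 2) * Np n e / Dp n e * Mp n e + (- (INR n - 1) * e ^ n + INR n * e ^ (n - 1) - 1) / (INR n * (INR n - 1)).

Ltac zpow n := rewrite ?(pow_i (n+2)), ?(pow_i (n+1)), ?(pow_i n), ?(pow_i (n-1)), ?(pow_i (n-2)) by lia.

Lemma Dp0 n : (3 <= n)%nat -> Dp n 0 = INR n.
Proof. intros Hn. unfold Dp. zpow n. ring. Qed.
Lemma den0 n : (3 <= n)%nat -> den n 0 = -2 / (INR n * INR n * (INR n * INR n - 1)).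
Proof. intros Hn. pose proof (INR3 n Hn). unfold den, Dp, Np, Mp. zpow n. field. repeat split; nra. Qed.
Lemma delta0 n : (3 <= n)%nat -> delta n 0 = - INR n * (INR n + 1).
Proof. intros Hn. pose proof (INR3 n Hn). unfold delta, Dp, Np, Mp, Kp. zpow n. field. repeat split; nra. Qed.
Lemma gamma0 n : (3 <= n)%nat -> gamma n 0 = 0.
Proof. intros Hn. pose proof (INR3 n Hn). unfold gamma. rewrite delta0 by auto. unfold Dp, Mp, Kp. zpow n. field. repeat split; nra. Qed.
Lemma alpha0 n : (3 <= n)%nat -> alpha n 0 = 0.
Proof. intros Hn. pose proof (INR3 n Hn). unfold alpha. rewrite delta0, gamma0 by auto. field. repeat split; nra. Qed.
Lemma beta0 n : (3 <= n)%nat -> beta n 0 = 0.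
Proof. intros Hn. pose proof (INR3 n Hn). unfold beta. rewrite delta0, gamma0 by auto. field. repeat split; nra. Qed.

Ltac nz n H :=  match goal with |- ?E <> 0 =>
  first [ replace E with (INR n) by (field; repeat split; intro; nra); intro; nra
        | replace E with (-2 / (INR n * INR n * (INR n * INR n - 1))) by (field; repeat split; intro; nra);
          unfold Rdiv; apply Rmult_integral_contrapositive_currified; [intro; lra | apply Rinv_neq_0_compat; intro; nra] ] end.

Ltac cont_tac n := let Hn := fresh in let H := fresh in intros Hn; pose proof (INR3 n Hn) as H;
  assert (0 < INR n * INR n * (INR n * INR n - 1)) by (apply Rmult_lt_0_compat; nra);
  unfold alpha, beta, gamma, delta, den, Dp, Np, Kp, Mp; auto_derive; zpow n; repeat split; nz n H.

Lemma cgamma n : (3 <= n)%nat -> ex_derive (fun e => gamma n e) 0.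
Proof. cont_tac n. Qed.
Lemma cdelta n : (3 <= n)%nat -> ex_derive (fun e => delta n e) 0.
Proof. cont_tac n. Qed.
Lemma calpha n : (3 <= n)%nat -> ex_derive (fun e => alpha n e) 0.
Proof. cont_tac n. Qed.
Lemma cbeta n : (3 <= n)%nat -> ex_derive (fun e => beta n e) 0.
Proof. cont_tac n. Qed.
Lemma cDp n : (3 <= n)%nat -> ex_derive (fun e => Dp n e) 0.
Proof. cont_tac n. Qed.
Lemma cden n : (3 <= n)%nat -> ex_derive (fun e => den n e) 0.
Proof. cont_tac n. Qed.

Definition Q1 n e r := - gamma n e / (INR n + 1) * r^(n+1) - (delta n e - gamma n e)/INR n * r^n
  - INR n*(1 - (2*INR n + delta n e)/(INR n*(INR n-1))) * r^(n-1) + (INR n - 1) * r^(n-2) - beta n e.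
Definition P n e r := - gamma n e * r^3 - (delta n e - gamma n e) * r^2
  - (INR n * INR n - 3 * INR n - delta n e) * r + (INR n - 1) * (INR n - 2).
Definition Q2 n e r := r^(n-3) * P n e r.
Lemma dQ n e r : (3 <= n)%nat -> derivable_pt_lim (Q n e) r (Q1 n e r).
Proof.
  intros Hn. apply is_derive_Reals. unfold Q. auto_derive. auto. unfold Q1.
  replace (Init.Nat.pred (n+2)) with (n+1)%nat by lia.
  replace (Init.Nat.pred (n+1)) with n by lia.
  replace (Init.Nat.pred (n-1)) with (n-2)%nat by lia.
  replace (Init.Nat.pred n) with (n-1)%nat by lia.
  rewrite !plus_INR, INRm by lia. simpl.
  pose proof (INR3 n Hn). field. lra.
Qed.
Lemma dQ1 n e r : (3 <= n)%nat -> derivable_pt_lim (Q1 n e) r (Q2 n e r).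
Proof.
  intros Hn. apply is_derive_Reals. unfold Q1. auto_derive. auto. unfold Q2, P.
  replace (Init.Nat.pred (n+1)) with n by lia.
  replace (Init.Nat.pred (n-1)) with (n-2)%nat by lia.
  replace (Init.Nat.pred (n-2)) with (n-3)%nat by lia.
  replace (Init.Nat.pred n) with (n-1)%nat by lia.
  assert (E : forall k, r^(n-3+k) = r^(n-3) * r^k) by (intros; apply pow_add).
  assert (E1 : r^n = r^(n-3)*r^3) by (rewrite <- E; f_equal; lia).
  assert (E2 : r^(n-1) = r^(n-3)*r^2) by (rewrite <- E; f_equal; lia).
  assert (E3 : r^(n-2) = r^(n-3)*r^1) by (rewrite <- E; f_equal; lia).
  rewrite E1, E2, E3, !plus_INR, !INRm by lia. simpl.
  pose proof (INR3 n Hn). field. lra.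
Qed.

Lemma powS4 (e : R) (n : nat) : (3 <= n)%nat ->
  e ^ (n-1) = e^(n-2) * e /\ e ^ n = e^(n-2) * e^2 /\ e^(n+1) = e^(n-2)*e^3 /\ e^(n+2) = e^(n-2)*e^4.
Proof.
  intros H.
  assert (G : forall k, e ^ (n - 2 + k) = e ^ (n-2) * e ^ k) by (intros; apply pow_add).
  repeat split.
  - replace (e^(n-2)*e) with (e^(n-2)*e^1) by ring. rewrite <- (G 1%nat). f_equal. lia.
  - rewrite <- (G 2%nat). f_equal. lia.
  - rewrite <- (G 3%nat). f_equal. lia.
  - rewrite <- (G 4%nat). f_equal. lia.
Qed.

Ltac ident_tac n e Hn HD Hden :=
  let H3 := fresh in
  pose proof (INR3 n Hn) as H3;
  unfold den, Q1, Q, alpha, beta, gamma, delta in *;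
  unfold Dp, Np, Kp, Mp in *;
  let E1 := fresh in let E2 := fresh in let E3 := fresh in let E4 := fresh in
  destruct (powS4 e n Hn) as (E1 & E2 & E3 & E4);
  rewrite E1, E2, E3, E4 in *;
  let x := fresh "x" in let nr := fresh "nr" in
  set (x := e ^ (n-2)) in *;
  set (nr := INR n) in *;
  field; repeat split; try (intro; lra);
  match goal with |- ?E <> 0 =>
    let Hc := fresh "Hc" in intro Hc; apply Hden;
    match goal with |- ?L = 0 =>
      replace L with (E / (Dp n e * (nr * (nr+1) * (nr-1)))) end end;
  [ match goal with Hc : _ = 0 |- _ => rewrite Hc end; unfold Rdiv; ring
  | unfold Dp; rewrite ?E1, ?E2, ?E3, ?E4; fold x; fold nr; field; repeat split; try (intro; lra) ].

Lemma Qe_zero (n : nat) (e : R) : (3 <= n)%nat ->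
  Dp n e <> 0 -> den n e <> 0 -> Q n e e = 0.
Proof. intros Hn HD Hden. ident_tac n e Hn HD Hden. Qed.

Lemma Q1e (n : nat) (e : R) : (3 <= n)%nat ->
  Dp n e <> 0 -> den n e <> 0 -> Q1 n e e = e^(n-2) * (1 - e).
Proof. intros Hn HD Hden. ident_tac n e Hn HD Hden. Qed.

Lemma Q_one n e : (3 <= n)%nat -> Q n e 1 = 0.
Proof. intros Hn. pose proof (INR3 n Hn). unfold Q, alpha, beta. rewrite !pow1. field. repeat split; intro; lra. Qed.
Lemma Q1_one n e : (3 <= n)%nat -> Q1 n e 1 = 0.
Proof. intros Hn. pose proof (INR3 n Hn). unfold Q1, beta. rewrite !pow1. field. repeat split; intro; lra. Qed.

Lemma near0 (f : R -> R) : ex_derive f 0 -> forall eta, 0 < eta ->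
  exists d, 0 < d /\ forall e, 0 < e < d -> Rabs (f e - f 0) < eta.
Proof.
  intros Hd eta He. apply ex_derive_continuous in Hd.
  apply (proj2 (continuity_pt_filterlim f 0)) in Hd.
  destruct (Hd eta He) as [d [Hd0 Hd1]]. exists d; split; auto.
  intros e [H1 H2]. apply (Hd1 e). split. split; [exact I | lra]. simpl. unfold R_dist.
  rewrite Rminus_0_r, Rabs_pos_eq; lra.
Qed.

Lemma absb c K : Rabs c < K -> -K < c < K.
Proof. unfold Rabs; destruct (Rcase_abs c); intros; lra. Qed.

Lemma lbX c K X : -K <= c <= K -> 0 <= X <= 1 -> -K <= c * X.
Proof. intros. nra. Qed.

Lemma P0_pos (N t : R) : 3 <= N -> 0 <= t <= 1 ->
  (4 * N * N * t <= 1 \/ 4 * N * (1 - t) <= 1) ->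
  1 <= (N - 1) * (N - 2) - 2 * N * (N - 1) * t + N * (N + 1) * t ^ 2.
Proof.
  intros HN Ht [H|H].
  - assert (2 * N * (N-1) * t <= 1/2) by nra. nra.
  - assert (E : (N - 1) * (N - 2) - 2 * N * (N - 1) * t + N * (N + 1) * t ^ 2
        = 2 + (1 - t) * (2 * N * (N-1) - N * (N+1) * (1+t))) by ring.
    rewrite E.
    assert (2 * N * (N-1) - N * (N+1) * (1+t) >= - 4 * N) by nra.
    nra.
Qed.

Lemma P_pos n e t eta : (3 <= n)%nat -> eta <= /8 ->
  Rabs (delta n e + INR n * (INR n + 1)) < eta -> Rabs (gamma n e) < eta ->
  0 <= t <= 1 -> (4 * INR n * INR n * t <= 1 \/ 4 * INR n * (1 - t) <= 1) ->
  0 < P n e t.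
Proof.
  intros Hn He Hu Hg Ht Hc.
  pose proof (INR3 n Hn) as HN.
  pose proof (P0_pos (INR n) t HN Ht Hc) as H0.
  apply absb in Hu. apply absb in Hg.
  set (u := delta n e + INR n * (INR n + 1)) in *.
  set (g := gamma n e) in *.
  assert (E : P n e t = ((INR n - 1) * (INR n - 2) - 2 * INR n * (INR n - 1) * t + INR n * (INR n + 1) * t ^ 2)
     + u * t + (- (u - g)) * t^2 + (-g) * t^3).
  { unfold P. fold g. replace (delta n e) with (u - INR n * (INR n + 1)) by (unfold u; ring). ring. }
  rewrite E.
  assert (0 <= t^2 <= 1) by (split; nra).
  assert (0 <= t^3 <= 1) by (simpl; split; nra).
  pose proof (lbX u eta t ltac:(lra) Ht).
  pose proof (lbX (-(u-g)) (2*eta) (t^2) ltac:(lra) ltac:(assumption)).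
  pose proof (lbX (-g) eta (t^3) ltac:(lra) ltac:(assumption)).
  lra.
Qed.

Lemma pow_sh (r : R) (n k : nat) : (3 <= n)%nat -> r ^ (n - 1 + k) = r^(n-1) * r^k.
Proof. intros; apply pow_add. Qed.

Lemma Q_mid n e rho eta m : (3 <= n)%nat -> 0 < rho < 1 -> 0 < eta ->
  m <= rho^(n-1) * (1-rho)^2 -> 6 * eta <= m ->
  Rabs (delta n e + INR n * (INR n + 1)) < eta -> Rabs (gamma n e) < eta ->
  Rabs (alpha n e) < eta -> Rabs (beta n e) < eta -> 0 < Q n e rho.
Proof.
  intros Hn Hr Heta Hm Hm6 Hu Hg Ha Hb.
  pose proof (INR3 n Hn) as HN.
  apply absb in Hu. apply absb in Hg. apply absb in Ha. apply absb in Hb.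
  set (N := INR n) in *.
  set (u := delta n e + N * (N + 1)) in *.
  set (g := gamma n e) in *.
  set (p := rho ^ (n-1)) in *.
  assert (Hp : 0 <= p <= 1).
  { unfold p; split. apply pow_le; lra. rewrite <- (pow1 (n-1)). apply pow_incr; lra. }
  set (k1 := / ((N+1)*(N+2))). set (k2 := / (N*(N+1))). set (k3 := /(N*(N-1))).
  assert (E : Q n e rho = p * (1-rho)^2 + (-g*k1) * (p*rho^3) + (-(u-g)*k2) * (p*rho^2) + (u*k3)*(p*rho)
     - alpha n e - beta n e * rho).
  { unfold Q. fold N. fold g.
    assert (E3 : rho^(n+2) = p * rho^3) by (unfold p; rewrite <- pow_add; f_equal; lia).
    assert (E2 : rho^(n+1) = p * rho^2) by (unfold p; rewrite <- pow_add; f_equal; lia).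
    assert (E1 : rho^n = p * rho) by (unfold p; replace (rho^(n-1)*rho) with (rho^(n-1)*rho^1) by ring; rewrite <- pow_add; f_equal; lia).
    rewrite E1, E2, E3. unfold k1, k2, k3. change (rho^(n-1)) with p. unfold u.
    field. repeat split; intro; lra. }
  rewrite E.
  assert (Hk1 : 0 < k1 <= 1). { unfold k1. split. apply Rinv_0_lt_compat; nra.
     rewrite <- Rinv_1. apply Rinv_le_contravar; nra. }
  assert (Hk2 : 0 < k2 <= /2). { unfold k2. split. apply Rinv_0_lt_compat; nra.
     apply Rinv_le_contravar; nra. }
  assert (Hk3 : 0 < k3 <= /2). { unfold k3. split. apply Rinv_0_lt_compat; nra.
     apply Rinv_le_contravar; nra. }
  assert (0 <= rho ^ 2 <= 1) by (simpl; split; nra).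
  assert (0 <= rho ^ 3 <= 1) by (replace (rho^3) with (rho * rho^2) by ring; split; nra).
  assert (0 <= p * rho ^ 3 <= 1) by (split; nra).
  assert (0 <= p * rho ^ 2 <= 1) by (split; nra).
  assert (0 <= p * rho <= 1) by (split; nra).
  pose proof (lbX (-g*k1) eta (p*rho^3) ltac:(split; nra) ltac:(assumption)).
  pose proof (lbX (-(u-g)*k2) eta (p*rho^2) ltac:(split; nra) ltac:(assumption)).
  pose proof (lbX (u*k3) eta (p*rho) ltac:(split; nra) ltac:(assumption)).
  assert (beta n e * rho <= eta) by nra.
  lra.
Qed.

Theorem lemma4p9 (n : nat) (Hn : (3 <= n)%nat) :
  exists e0 : R, 0 < e0 /\
    forall e : R, 0 < e < 1 -> e < e0 ->
      forall rho : R, e < rho < 1 -> 0 < Q n e rho.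
Proof.
  pose proof (INR3 n Hn) as HN.
  set (N := INR n) in *.
  set (a := / (4 * N * N)).
  assert (Ha : 0 < a) by (unfold a; apply Rinv_0_lt_compat; nra).
  assert (HaK : a * (4 * N * N) = 1) by (unfold a; field; intro; nra).
  set (c := / (4 * N)).
  assert (Hc : 0 < c) by (unfold c; apply Rinv_0_lt_compat; nra).
  assert (HcK : c * (4 * N) = 1) by (unfold c; field; intro; nra).
  set (m := a ^ (n-1) * c ^ 2).
  assert (Hm : 0 < m) by (unfold m; apply Rmult_lt_0_compat; apply pow_lt; lra).
  set (eta := Rmin (/8) (m / 6)).
  assert (Heta : 0 < eta) by (unfold eta; apply Rmin_pos; lra).
  assert (Heta1 : eta <= /8) by apply Rmin_l.
  assert (Heta2 : 6 * eta <= m) by (pose proof (Rmin_r (/8) (m/6)); fold eta in H; lra).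
  set (d0 := 2 / (N * N * (N * N - 1))).
  assert (Hd0 : 0 < d0) by (unfold d0; apply Rdiv_lt_0_compat; [lra | apply Rmult_lt_0_compat; nra]).
  assert (Hden0 : den n 0 = - d0) by (rewrite den0 by auto; unfold d0; fold N; field; split; intro; nra).
  destruct (near0 _ (cdelta n Hn) eta Heta) as [d1 [Hd1 H1]].
  destruct (near0 _ (cgamma n Hn) eta Heta) as [d2 [Hd2 H2]].
  destruct (near0 _ (calpha n Hn) eta Heta) as [d3 [Hd3 H3]].
  destruct (near0 _ (cbeta n Hn) eta Heta) as [d4 [Hd4 H4]].
  destruct (near0 _ (cDp n Hn) 1 ltac:(lra)) as [d5 [Hd5 H5]].
  destruct (near0 _ (cden n Hn) d0 Hd0) as [d6 [Hd6 H6]].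
  exists (Rmin (Rmin (Rmin d1 d2) (Rmin d3 d4)) (Rmin d5 d6)).
  split. { repeat apply Rmin_pos; lra. }
  intros e He He0 rho Hr.
  assert (Hm1 : e < d1 /\ e < d2 /\ e < d3 /\ e < d4 /\ e < d5 /\ e < d6).
  { pose proof (Rmin_l (Rmin (Rmin d1 d2) (Rmin d3 d4)) (Rmin d5 d6)).
    pose proof (Rmin_r (Rmin (Rmin d1 d2) (Rmin d3 d4)) (Rmin d5 d6)).
    pose proof (Rmin_l (Rmin d1 d2) (Rmin d3 d4)). pose proof (Rmin_r (Rmin d1 d2) (Rmin d3 d4)).
    pose proof (Rmin_l d1 d2). pose proof (Rmin_r d1 d2). pose proof (Rmin_l d3 d4). pose proof (Rmin_r d3 d4).
    pose proof (Rmin_l d5 d6). pose proof (Rmin_r d5 d6).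
    repeat split; lra. }
  destruct Hm1 as (L1 & L2 & L3 & L4 & L5 & L6).
  specialize (H1 e (conj (proj1 He) L1)). rewrite delta0 in H1 by auto.
  specialize (H2 e (conj (proj1 He) L2)). rewrite gamma0 in H2 by auto.
  specialize (H3 e (conj (proj1 He) L3)). rewrite alpha0 in H3 by auto.
  specialize (H4 e (conj (proj1 He) L4)). rewrite beta0 in H4 by auto.
  specialize (H5 e (conj (proj1 He) L5)). rewrite Dp0 in H5 by auto.
  specialize (H6 e (conj (proj1 He) L6)). rewrite Hden0 in H6.
  rewrite Rminus_0_r in H2, H3, H4.
  replace (delta n e - - INR n * (INR n + 1)) with (delta n e + INR n * (INR n + 1)) in H1 by ring.
  apply absb in H5. apply absb in H6.
  assert (HD : Dp n e <> 0) by (intro; fold N in H5; lra).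
  assert (Hdn : den n e <> 0) by (intro; lra).
  pose proof (Qe_zero n e Hn HD Hdn) as Qe.
  pose proof (Q1e n e Hn HD Hdn) as Q1e'.
  pose proof (Q_one n e Hn) as Qo.
  pose proof (Q1_one n e Hn) as Q1o.
  assert (Q2pos : forall t, 0 < t <= 1 -> (4 * N * N * t <= 1 \/ 4 * N * (1 - t) <= 1) -> 0 < Q2 n e t).
  { intros t Ht Hct. unfold Q2. apply Rmult_lt_0_compat. apply pow_lt; lra.
    apply (P_pos n e t eta Hn Heta1 H1 H2); [lra | exact Hct]. }
  destruct (Rle_lt_dec (4 * N * N * rho) 1) as [R1 | R1].
  -
    destruct (MVT_cor2 (Q n e) (Q1 n e) e rho ltac:(lra) (fun c _ => dQ n e c Hn)) as [c1 [Ec1 Hc1]].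
    destruct (MVT_cor2 (Q1 n e) (Q2 n e) e c1 ltac:(lra) (fun c _ => dQ1 n e c Hn)) as [c2 [Ec2 Hc2]].
    assert (0 < Q2 n e c2) by (apply Q2pos; [lra | left; nra]).
    assert (0 < e ^ (n-2) * (1 - e)) by (apply Rmult_lt_0_compat; [apply pow_lt|]; lra).
    assert (0 < Q1 n e c1) by nra.
    nra.
  - destruct (Rle_lt_dec (4 * N * (1 - rho)) 1) as [R2 | R2].
    + destruct (MVT_cor2 (Q n e) (Q1 n e) rho 1 ltac:(lra) (fun c _ => dQ n e c Hn)) as [c1 [Ec1 Hc1]].
      destruct (MVT_cor2 (Q1 n e) (Q2 n e) c1 1 ltac:(lra) (fun c _ => dQ1 n e c Hn)) as [c2 [Ec2 Hc2]].
      assert (0 < Q2 n e c2) by (apply Q2pos; [lra | right; nra]).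
      assert (Q1 n e c1 < 0) by nra.
      nra.
    + apply (Q_mid n e rho eta m Hn ltac:(lra) Heta); auto.
      unfold m. apply Rmult_le_compat.
      * apply pow_le; lra.
      * apply pow_le; lra.
      * apply pow_incr. split; [lra | nra].
      * apply pow_incr. split; [lra | nra].
Qed.
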